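(* Let $p$ be a prime, $q$ a power of $p$, $m \in \mathbb{N}$, and $c_1,\dots,c_m \in \mathbb{N}$ with $\sum_{j=1}^m c_j < \frac{q}{2}$. Then the set $B(q; c_1,\dots,c_m; 1,\dots,1) = \{ \sum_{j=1}^m c_j q^{n_j} : n_1,\dots,n_m \in \mathbb{N}_0\}$ is an $\overline{\mathbb{F}_p}(t)$-DML set over split torus.
   Context: For a field $K$ and a quasi-projective variety $X$ over $K$, a set $S \subseteq \mathbb{N}_0$ is a $K$-DML set over $X$ if there exist an endomorphism $\Phi$ of $X$ (a morphism $X \to X$ defined over $K$), a point $\alpha \in X(K)$ and a closed subvariety $V \subseteq X$ defined over $K$ (not necessarily irreducible) such that $S = \{ n \in \mathbb{N}_0 : \Phi^n(\alpha) \in V(K)\}$. $S$ is a $K$-DML set over split torus if it is a $K$-DML set over $\mathbb{G}_m^k$ for some $k \in \mathbb{N}$. *)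

(* Defs.v *)
From HB Require Import structures.
From mathcomp Require Import all_boot all_order all_algebra.
From mathcomp Require Import mpoly.
Set Implicit Arguments. Unset Strict Implicit. Unset Printing Implicit Defensive.
Import Order.TTheory GRing.Theory Num.Theory.
Local Open Scope ring_scope.

Definition torus_point (K : fieldType) (k : nat) (x : 'I_k -> K) : Prop :=
  forall i, x i != 0.

(* A Laurent polynomial in K[x_1^{+-1},...,x_k^{+-1}] is written P / x^e with
   P a polynomial and e an exponent vector; its value at a torus point x. *)
Definition laurent_eval (K : fieldType) (k : nat)
    (P : {mpoly K[k]}) (e : 'X_{1..k}) (x : 'I_k -> K) : K :=
  P.@[x] / ('X_[e] : {mpoly K[k]}).@[x].

(* P / x^e is a unit of the Laurent polynomial ring:
   there is Q / x^d with (P / x^e) * (Q / x^d) = 1, i.e. P * Q = x^(e+d). *)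
Definition laurent_unit (K : fieldType) (k : nat)
    (P : {mpoly K[k]}) (e : 'X_{1..k}) : Prop :=
  exists (Q : {mpoly K[k]}) (d : 'X_{1..k}), P * Q = 'X_[(e + d)%MM].

(* An endomorphism of G_m^k over K corresponds to a K-algebra endomorphism of
   K[x^{+-1}], i.e. to a k-tuple of units (P_i / x^{e_i}) of K[x^{+-1}];
   we record it by its data and its action on K-points. *)
Definition torus_endo_map (K : fieldType) (k : nat)
    (P : 'I_k -> {mpoly K[k]}) (e : 'I_k -> 'X_{1..k}) (x : 'I_k -> K) : 'I_k -> K :=
  fun i => laurent_eval (P i) (e i) x.

Definition torus_endo (K : fieldType) (k : nat)
    (P : 'I_k -> {mpoly K[k]}) (e : 'I_k -> 'X_{1..k}) : Prop :=
  forall i, laurent_unit (P i) (e i).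

(* S is a K-DML set over G_m^k: there are an endomorphism Phi, a point
   alpha in G_m^k(K), and a closed subvariety V of G_m^k over K (the zero locus
   in the torus of a finite family F of polynomials over K) with
   S = { n | Phi^n(alpha) \in V(K) }. *)
Definition DML_set_over_torus (K : fieldType) (k : nat) (S : nat -> Prop) : Prop :=
  exists (P : 'I_k -> {mpoly K[k]}) (e : 'I_k -> 'X_{1..k})
         (alpha : 'I_k -> K) (F : seq {mpoly K[k]}),
    torus_endo P e /\ torus_point alpha /\
    forall n : nat,
      S n <-> (forall f, f \in F -> f.@[iter n (torus_endo_map P e) alpha] = 0).

Definition DML_set_over_split_torus (K : fieldType) (S : nat -> Prop) : Prop :=
  exists k : nat, (0 < k)%N /\ DML_set_over_torus K k S.

Definition is_alg_closure_Fp (p : nat) (L : closedFieldType) : Prop :=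
  p \in [pchar L] /\
  forall x : L, exists Pp : {poly 'F_p},
    Pp != 0 /\ root (map_poly (fun a : 'F_p => (nat_of_ord a)%:R : L) Pp) x.

Definition Bset (q m : nat) (c : 'I_m -> nat) (s : nat) : Prop :=
  exists ns : 'I_m -> nat, s = (\sum_(j < m) c j * q ^ ns j)%N.

(* Main.v *)
Require Import Defs.
Set Warnings "-notation-overridden,-deprecated,-ambiguous-paths,-notation-incompatible-prefix".
From HB Require Import structures.
From mathcomp Require Import all_boot all_order all_algebra.
From mathcomp Require Import mpoly.
From mathcomp Require Import separable fingroup perm.
From mathcomp Require Import zify.
Set Implicit Arguments. Unset Strict Implicit. Unset Printing Implicit Defensive.
Import Order.TTheory GRing.Theory Num.Theory.
Local Open Scope ring_scope.
Ltac glia_gen e := repeat match goal with H : context[e] |- _ => revert H end; generalize e; intros; first [lia | nia].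

Lemma arith1 Q k i : (1 < Q)%N -> (k <= Q.-1)%N -> (i < Q.-1)%N -> (0 < Q.-1 - k + i)%N ->
  (Q.-1 %| Q.-1 - k + i)%N -> i = k.
Proof.
move=> h1 h2 h3 h4 /dvdnP[u hu].
have : (Q.-1 - k + i < 2 * Q.-1)%N by lia.
case: u hu => [|[|u]] hu; [lia|lia|nia].
Qed.
Lemma arith2 Q k i : (1 < Q)%N -> (k <= Q.-1)%N -> (i < k)%N -> (0 < Q.-1 - k + i)%N ->
  (Q.-1 %| Q.-1 - k + i)%N -> False.
Proof.
move=> h1 h2 h3 h4 /dvdnP[u hu].
case: u hu => [|[|u]] hu; [lia|lia|nia].
Qed.

Section Fq.
Variables (p : nat) (L : closedFieldType) (pL : p \in [pchar L]) (r : nat) (hr : (0 < r)%N).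
Local Notation q := (p ^ r)%N.

Lemma q_gt1 : (1 < q)%N.
Proof. have := pcharf_prime pL => /prime_gt1 hp; by rewrite -(exp1n r) ltn_exp2r // -ltn0Sn; lia. Qed.

Lemma qR0 : q%:R = 0 :> L.
Proof. by rewrite natrX (pcharf0 pL) expr0n; case: r hr. Qed.

Lemma exists_A : {A : seq L | [/\ uniq A, size A = q & forall a, (a \in A) = (a ^+ q == a)]}.
Proof.
have q1 := q_gt1.
pose pol : {poly L} := 'X^q - 'X.
have szp : size pol = q.+1.
  by rewrite /pol size_addl ?size_polyXn // size_opp size_polyX ltnS.
have lcp : lead_coef pol = 1.
  by rewrite /pol lead_coefDl ?lead_coefXn // size_opp size_polyX size_polyXn ltnS.
have [rs Hrs] := closed_field_poly_normal pol.
rewrite lcp scale1r in Hrs.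
exists rs; split.
- rewrite -separable_prod_XsubC -Hrs unlock.
  have -> : pol^`() = -1.
    rewrite /pol derivB derivXn derivX -mulr_natr.
    have -> : (q%:R : {poly L}) = 0 by rewrite -(rmorph_nat (@polyC L)) qR0.
    by rewrite mulr0 sub0r.
  by rewrite -scaleN1r coprimepZr ?oppr_eq0 ?oner_eq0 // coprimep1.
- by apply: succn_inj; rewrite -szp Hrs size_prod_XsubC.
- move=> a; rewrite -root_prod_XsubC -Hrs /root /pol !hornerE subr_eq0.
  done.
Qed.

Variable A : seq L.
Hypothesis hA : [/\ uniq A, size A = q & forall a, (a \in A) = (a ^+ q == a)].

Lemma A0 : (0 : L) \in A.
Proof. by case: hA => _ _ ->; rewrite expr0n; have := q_gt1; case: (p ^ r)%N. Qed.

Lemma Aunit a : a \in A -> a != 0 -> a ^+ q.-1 = 1.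
Proof.
case: hA => _ _ -> /eqP haq ha0; have q1 := q_gt1.
apply: (mulIf ha0); rewrite mul1r -exprSr prednK //; lia.
Qed.

Lemma sum_const_seq (T : eqType) (s : seq T) (x : L) : \sum_(a <- s) x = x *+ size s.
Proof. by elim: s => [|y s IH]; rewrite ?big_nil ?big_cons ?IH ?mulr0n // mulrS. Qed.

Lemma powsum e : \sum_(a <- A) a ^+ e = if (0 < e)%N && (q.-1 %| e)%N then -1 else 0.
Proof.
have q1 := q_gt1; case: hA => uA sA memA.
case: e => [|e].
  by rewrite /= (eq_bigr (fun _ => 1)) // sum_const_seq sA -mulr_natr mul1r qR0.
rewrite (perm_big _ (perm_to_rem A0)) big_cons expr0n /= add0r.
have remnz : forall a, a \in rem 0 A -> a != 0 /\ a \in A.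
  by move=> a; rewrite mem_rem_uniq // inE => /andP[].
have szr : size (rem 0 A) = q.-1 by rewrite size_rem ?A0 // sA.
case: ifP => hdiv.
  rewrite (eq_big_seq (fun _ => 1)); last first.
    move=> a /remnz [ha0 haA]; case/dvdnP: hdiv => k ->.
    by rewrite mulnC exprM Aunit // expr1n.
  rewrite sum_const_seq szr -mulr_natr mul1r -subn1 natrB ?qR0 ?sub0r //; lia.
set S := \sum_(_ <- _) _.
have [b hbr hbe] : exists2 b, b \in rem 0 A & b ^+ e.+1 != 1.
  case: (boolP (has (fun b => b ^+ e.+1 != 1) (rem 0 A))) => [/hasP[b hb hbe]|hall].
    by exists b.
  exfalso; move: hall; rewrite -all_predC => /allP hall.
  set e' := (e.+1 %% q.-1)%N.
  have he'0 : (0 < e')%N by rewrite lt0n; apply: contraFN hdiv => /eqP h; rewrite /dvdn -/e' h.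
  have he'q : (e' < q.-1)%N by rewrite ltn_pmod //; lia.
  have hroot : all (root ('X^e' - 1)) (rem 0 A).
    apply/allP => b hb; have [hb0 hbA] := remnz b hb.
    have := hall b hb; rewrite /= negbK => /eqP hbe.
    rewrite /root !hornerE subr_eq0; apply/eqP.
    by rewrite -hbe [in RHS](divn_eq e.+1 q.-1) exprD mulnC exprM Aunit // expr1n mul1r.
  have := max_poly_roots _ hroot (rem_uniq _ uA).
  have -> : ('X^e' - 1 : {poly L}) != 0 by rewrite -size_poly_eq0 size_XnsubC.
  by rewrite size_XnsubC // szr => /(_ isT); lia.
have [hb0 hbA] := remnz b hbr.
have hperm : perm_eq (map (fun a => b * a) A) A.
  apply: uniq_perm => //; first by rewrite map_inj_uniq //; apply: mulfI.
  have [] := uniq_min_size (s1 := map (fun a => b * a) A) (s2 := A) _ _ _ => //.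
  - by rewrite map_inj_uniq //; apply: mulfI.
  - move=> x /mapP[a ha ->]; move: (ha) (hbA); rewrite !memA => /eqP ha' /eqP hb'.
    by rewrite exprMn ha' hb'.
  - by rewrite size_map.
have : \sum_(a <- A) (b * a) ^+ e.+1 = b ^+ e.+1 * \sum_(a <- A) a ^+ e.+1.
  by rewrite mulr_sumr; apply: eq_bigr => a _; rewrite exprMn.
rewrite -(big_map (fun a => b * a) xpredT (fun x => x ^+ e.+1)) (perm_big _ hperm).
rewrite (perm_big _ (perm_to_rem A0)) big_cons expr0n /= add0r -/S.
move/eqP; rewrite -subr_eq0 -{1}(mul1r S) -mulrBl mulf_eq0 subr_eq0 eq_sym (negbTE hbe) /=.
by move/eqP.
Qed.

Lemma coef_XD1n (R : nzRingType) n k : ((('X + 1) ^+ n : {poly R})`_k) = ('C(n, k))%:R.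
Proof.
rewrite exprD1n coef_sum.
have E : forall i : 'I_n.+1, (('X^i *+ 'C(n, i) : {poly R})`_k) = if (i == k :> nat) then ('C(n, k))%:R else 0.
  by move=> i; rewrite coefMn coefXn eq_sym; case: eqP => [->|_]; rewrite ?mul0rn.
rewrite (eq_bigr _ (fun i _ => E i)).
have [hk|hk] := ltnP k n.+1.
  rewrite (bigD1 (Ordinal hk)) //= eqxx big1 ?addr0 //.
  move=> i /eqP hi; case: eqP => // hik; exfalso; apply: hi; exact: val_inj.
rewrite bin_small //; apply: big1 => i _; case: eqP => // hik.
Qed.

Lemma polyL_pchar : p \in [pchar {poly L}].
Proof. by rewrite (rmorph_pchar (@polyC L)). Qed.

Lemma qnat_pchar (R : nzRingType) : p \in [pchar R] -> [pchar R].-nat q.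
Proof.
move=> hp; rewrite pnatX; apply/orP; left.
by rewrite pnatE ?(pcharf_prime hp).
Qed.

Lemma lucas a b c d : (a < q)%N -> (c < q)%N ->
  ('C(a + q * b, c + q * d))%:R = ('C(a, c) * 'C(b, d))%:R :> L.
Proof.
move=> ha hc; have q1 := q_gt1.
rewrite -(coef_XD1n L) exprD exprM (exprDn_pchar _ _ (qnat_pchar polyL_pchar)) expr1n.
rewrite [(_ + 1) ^+ b]exprD1n mulr_sumr coef_sum.
have F : forall i : 'I_b.+1, ((('X + 1) ^+ a * ('X^q ^+ i *+ 'C(b, i)) : {poly L})`_(c + q * d))
   = if (i == d :> nat) then ('C(a, c) * 'C(b, d))%:R else 0.
  move=> i; rewrite mulrnAr coefMn -exprM coefMXn.
  case: ifP => hlt; case: ifP => hid.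
  - by exfalso; move: hlt; rewrite (eqP hid); lia.
  - by rewrite mul0rn.
  - by rewrite (eqP hid) addnK coef_XD1n natrM mulr_natr.
  - rewrite coef_XD1n bin_small ?mul0rn //.
    have : (i < d)%N.
      have : (q * i < q * d.+1)%N by rewrite mulnS; lia.
      rewrite ltn_pmul2l; last lia.
      by rewrite ltnS leq_eqVlt hid.
    move=> hlt'; have : (q * i.+1 <= q * d)%N by rewrite leq_pmul2l //; lia.
    rewrite mulnS; lia.
rewrite (eq_bigr _ (fun i _ => F i)).
have [hd|hd] := ltnP d b.+1.
  rewrite (bigD1 (Ordinal hd)) //= eqxx big1 ?addr0 // => i /eqP hi.
  case: eqP => // hid; exfalso; apply: hi; exact: val_inj.
rewrite big1 ?(bin_small hd) ?muln0 // => i _.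
by case: eqP => // hid; move: (ltn_ord i); rewrite hid; lia.
Qed.

Fixpoint Eaux (f n : nat) : seq nat :=
  match f with 0 => [::] | f'.+1 => nseq (n %% q) 0%N ++ map S (Eaux f' (n %/ q)) end.

Lemma sum_nseq0 k : (\sum_(e <- nseq k 0%N) q ^ e = k)%N.
Proof. by elim: k => [|k IH]; rewrite ?big_nil //= big_cons IH expn0 add1n. Qed.

Lemma divq_le f n : (n <= f.+1)%N -> (n %/ q <= f)%N.
Proof.
move=> hn; have q1 := q_gt1; case: n hn => [|n] hn; first by rewrite div0n.
have : (n.+1 %/ q < n.+1)%N by rewrite ltn_Pdiv.
lia.
Qed.

Lemma Eaux_sum f n : (n <= f)%N -> (\sum_(e <- Eaux f n) q ^ e)%N = n.
Proof.
elim: f n => [|f IH] n hn /=; first by rewrite big_nil; lia.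
rewrite big_cat /= sum_nseq0 big_map.
under eq_bigr do rewrite expnS.
by rewrite -big_distrr /= IH ?divq_le // [in RHS](divn_eq n q) addnC mulnC.
Qed.

Lemma size_Eaux f n : size (Eaux f.+1 n) = (n %% q + size (Eaux f (n %/ q)))%N.
Proof. by rewrite /= size_cat size_nseq size_map. Qed.

Lemma claim (C : nat) : (2 * C < q)%N -> forall f n, (n <= f)%N -> forall x0, (x0 <= C)%N ->
  (C < x0 + size (Eaux f n))%N ->
  exists N' j u, [/\ (N' <= n)%N, ('C(n, N'))%:R != 0 :> L, N' = (j + u * q.-1)%N &
    ((C < x0 + j <= q.-1)%N || (C < j <= q.-1)%N)].
Proof.
move=> hC; have q1 := q_gt1.
elim=> [|f IH] n hn x0 hx0 /=; first by lia.
rewrite size_cat size_nseq size_map => hsz.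
set a := (n %% q)%N; set b := (n %/ q)%N.
have ha : (a < q)%N by rewrite ltn_mod; lia.
have hn' : n = (a + q * b)%N by rewrite /a /b addnC mulnC -divn_eq.
have hL : forall N, ('C(n, a + q * N))%:R = ('C(b, N))%:R :> L.
  by move=> N; rewrite hn' lucas // binn mul1n.
have hL0 : forall N, ('C(n, 0 + q * N))%:R = ('C(b, N))%:R :> L.
  by move=> N; rewrite hn' lucas // ?bin0 ?mul1n //; lia.
case: (ltnP C a) => haC.
  exists a, a, 0%N; split; [lia| |lia|].
    by rewrite -[a]addn0 -(muln0 q) hL bin0 oner_eq0.
  by apply/orP; right; lia.
case: (ltnP C (x0 + a)) => hx0a.
  exists a, a, 0%N; split; [lia| |lia|].
    by rewrite -[a]addn0 -(muln0 q) hL bin0 oner_eq0.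
  by apply/orP; left; lia.
have hsz' : (C < x0 + a + size (Eaux f b))%N by move: hsz; rewrite -/a -/b; lia.
have [N [j [u [hNb hCb hNj hor]]]] := IH b (divq_le hn) (x0 + a)%N hx0a hsz'.
case/orP: hor => hj.
  exists (a + q * N)%N, (a + j)%N, (j + q * u)%N; split.
  - by rewrite {1}hn' leq_add2l leq_mul2l hNb orbT.
  - by rewrite hL.
  - rewrite hNj; have -> : q = (q.-1).+1 by lia.
    rewrite /=; nia.
  - apply/orP; left; lia.
exists (0 + q * N)%N, j, (j + q * u)%N; split.
- by rewrite {1}hn' add0n (leq_trans _ (leq_addl a _)) // leq_mul2l hNb orbT.
- by rewrite hL0.
- rewrite hNj; have -> : q = (q.-1).+1 by lia.
  rewrite /=; nia.
- apply/orP; right; lia.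
Qed.

Local Notation K := {fraction {poly L}}.
Local Notation "x %:F" := (@FracField.tofrac _ x).
Definition cK (a : L) : K := (a%:P)%:F.
Definition tK : K := ('X : {poly L})%:F.

Lemma cKD a b : cK (a + b) = cK a + cK b. Proof. by rewrite /cK !rmorphD. Qed.
Lemma cKM a b : cK (a * b) = cK a * cK b. Proof. by rewrite /cK !rmorphM. Qed.
Lemma cKX a k : cK (a ^+ k) = cK a ^+ k. Proof. by rewrite /cK !rmorphXn. Qed.
Lemma cKN a : cK (- a) = - cK a. Proof. by rewrite /cK !rmorphN. Qed.
Lemma cK1 : cK 1 = 1. Proof. by rewrite /cK rmorph1. Qed.
Lemma cK0 : cK 0 = 0. Proof. by rewrite /cK rmorph0. Qed.
Lemma cK_sum (s : seq L) (F : L -> L) : cK (\sum_(a <- s) F a) = \sum_(a <- s) cK (F a).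
Proof. by rewrite /cK rmorph_sum rmorph_sum. Qed.

Lemma K_pchar : p \in [pchar K].
Proof. by rewrite (rmorph_pchar (@FracField.tofrac _)) // polyL_pchar. Qed.

Lemma Aq a : a \in A -> a ^+ q = a.
Proof. by case: hA => _ _ ->; move/eqP. Qed.

Lemma Aqe a e : a \in A -> a ^+ (q ^ e) = a.
Proof.
move=> ha; elim: e => [|e IH]; first by rewrite expn0 expr1.
by rewrite expnSr exprM IH Aq.
Qed.

Lemma frob_qe (x : K) a e : a \in A -> (x + cK a) ^+ (q ^ e) = x ^+ (q ^ e) + cK a.
Proof.
move=> ha; rewrite exprDn_pchar; first by rewrite -cKX Aqe.
rewrite -expnM pnatX; apply/orP; left.
by rewrite pnatE ?(pcharf_prime K_pchar) // K_pchar.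
Qed.

Definition PE (E : seq nat) : {poly K} := \prod_(e <- E) ('X - (- tK ^+ (q ^ e))%:P).

Lemma PE_horner E a : a \in A -> (PE E).[cK a] = (tK + cK a) ^+ (\sum_(e <- E) q ^ e)%N.
Proof.
move=> ha; rewrite /PE horner_prod -prodrXr; apply: eq_bigr => e _.
by rewrite hornerXsubC opprK frob_qe // addrC.
Qed.

Lemma size_PE E : size (PE E) = (size E).+1.
Proof. by rewrite /PE size_prod_XsubC. Qed.

Lemma monic_PE E : PE E \is monic.
Proof. exact: monic_prod_XsubC. Qed.

Lemma powsumK e : \sum_(a <- A) cK a ^+ e = if (0 < e)%N && (q.-1 %| e)%N then -1 else 0.
Proof.
rewrite (eq_bigr (fun a => cK (a ^+ e))); last by move=> a _; rewrite cKX.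
by rewrite -cK_sum powsum; case: ifP; rewrite ?cKN ?cK1 ?cK0.
Qed.

Lemma interp (P : {poly K}) k : (size P <= q.-1)%N -> (k <= q.-1)%N ->
  - \sum_(a <- A) cK a ^+ (q.-1 - k) * P.[cK a] = P`_k.
Proof.
move=> hP hk; have q1 := q_gt1.
under eq_bigr do rewrite horner_coef mulr_sumr.
rewrite exchange_big /=.
under eq_bigr do (under eq_bigr do rewrite mulrCA -exprD; rewrite -mulr_sumr powsumK).
have [hkP|hkP] := ltnP k (size P).
  rewrite (bigD1 (Ordinal hkP)) //= big1 ?addr0.
    rewrite subnK; last lia.
    have -> : (0 < q.-1)%N by lia.
    by rewrite dvdnn mulrN1 opprK.
  move=> i /eqP hi; case: ifP; rewrite ?mulr0 // => /andP[h0 hd].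
  exfalso; apply: hi; apply: val_inj => /=.
  apply: (arith1 q1 hk _ h0 hd); exact: (leq_trans (ltn_ord i) hP).
rewrite nth_default // big1 ?oppr0 // => i _.
case: ifP; rewrite ?mulr0 // => /andP[h0 hd].
exfalso; apply: (arith2 q1 hk _ h0 hd); exact: (leq_trans (ltn_ord i) hkP).
Qed.

Definition ell k n : K := - \sum_(a <- A) cK a ^+ (q.-1 - k) * (tK + cK a) ^+ n.

Lemma ell_PE E k : (size E < q.-1)%N -> (k <= q.-1)%N ->
  ell k (\sum_(e <- E) q ^ e)%N = (PE E)`_k.
Proof.
move=> hE hk; rewrite -interp ?size_PE //; congr (- _).
by apply: eq_big_seq => a ha; rewrite PE_horner.
Qed.

Lemma coef_XaddC_exp (a : L) n M : (M <= n)%N ->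
  ((('X + a%:P) ^+ n : {poly L})`_M) = a ^+ (n - M) *+ 'C(n, M).
Proof.
move=> hM; rewrite addrC exprDn coef_sum.
have hM' : (M < n.+1)%N by [].
rewrite (bigD1 (Ordinal hM')) //= big1 ?addr0.
  by rewrite coefMn -rmorphXn coefCM coefXn eqxx mulr1.
move=> i /eqP hi; rewrite coefMn -rmorphXn coefCM coefXn.
case: eqP => [hMi|]; last by rewrite mulr0 mul0rn.
by exfalso; apply: hi; apply: val_inj; rewrite /= hMi.
Qed.

Lemma ell_nonzero C n : (2 * C < q)%N -> (C < size (Eaux n n))%N ->
  exists k, (C < k <= q.-1)%N /\ ell k n != 0.
Proof.
move=> hC hsz; have q1 := q_gt1.
have [N [j [u [hNn hCN hNj hor]]]] := claim hC (leqnn n) (leq0n C) hsz.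
have hj : (C < j <= q.-1)%N by move: hor; rewrite add0n orbb.
exists j; split => //.
pose Psi : {poly L} := - \sum_(a <- A) (a ^+ (q.-1 - j))%:P * ('X + a%:P) ^+ n.
have -> : ell j n = Psi%:F.
  rewrite /ell /Psi rmorphN rmorph_sum; congr (- _); apply: eq_bigr => a _.
  by rewrite rmorphM !rmorphXn rmorphD.
rewrite tofrac_eq0; apply/eqP => hPsi.
have : Psi`_(n - N) = ('C(n, N))%:R.
  rewrite /Psi coefN coef_sum.
  under eq_bigr do rewrite coefCM coef_XaddC_exp ?leq_subr // subKn // mulrnAr -exprD.
  rewrite sumrMnl powsum.
  have -> : (0 < q.-1 - j + N)%N by clear -hj hNj q1; glia_gen (p ^ r)%N.
  have -> : (q.-1 %| q.-1 - j + N)%N.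
    apply/dvdnP; exists u.+1; rewrite hNj mulSn; clear -hj hNj q1; glia_gen (p ^ r)%N.
  by rewrite /= mulNrn opprK bin_sub.
by rewrite hPsi coef0 => /esym/eqP; rewrite (negbTE hCN).
Qed.

Variables (m : nat) (c : 'I_m -> nat) (C : nat).
Hypothesis hCsum : (\sum_(j < m) c j)%N = C.

Definition Sym (tau : K) : {mpoly K[C]} :=
  \prod_(pi : {ffun 'I_m -> 'I_C})
    (\prod_(i < C) (tau%:MP - 'X_i) - \prod_(j < m) (tau%:MP - 'X_(pi j)) ^+ c j).

Lemma msymXU (s : 'S_C) (i : 'I_C) : msym s ('X_i : {mpoly K[C]}) = 'X_(s i).
Proof.
rewrite msymX; congr 'X_[_]; apply/mnmP => j.
by rewrite mnmE !mnm1E (canF_eq (permK s)).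
Qed.

Lemma msymC (s : 'S_C) (x : K) : msym s (x%:MP : {mpoly K[C]}) = x%:MP.
Proof. by rewrite -alg_mpolyC msymZ msym1. Qed.

Lemma msym_prodX (I : finType) (f : I -> 'I_C) (e : I -> nat) (s : 'S_C) (tau : K) :
  msym s (\prod_(i : I) (tau%:MP - 'X_(f i)) ^+ e i) = \prod_i (tau%:MP - 'X_(s (f i))) ^+ e i.
Proof. by rewrite rmorph_prod; apply: eq_bigr => i _; rewrite rmorphXn rmorphB /= msymC msymXU. Qed.

Lemma msym_prodX1 (s : 'S_C) (tau : K) :
  msym s (\prod_(i < C) (tau%:MP - 'X_i)) = \prod_(i < C) (tau%:MP - 'X_i).
Proof.
rewrite rmorph_prod /=.
rewrite (eq_bigr (fun i => tau%:MP - 'X_(s i))); last by move=> i _; rewrite rmorphB /= msymC msymXU.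
by rewrite [RHS](reindex_perm s).
Qed.

Lemma Sym_sym tau : Sym tau \is symmetric.
Proof.
apply/issymP => s; rewrite /Sym rmorph_prod /=.
pose h (pi : {ffun 'I_m -> 'I_C}) : {ffun 'I_m -> 'I_C} := [ffun j => s (pi j)].
have hinj : injective h.
  move=> pi1 pi2 /ffunP E; apply/ffunP => j; have := E j; rewrite !ffunE; exact: perm_inj.
rewrite (eq_bigr (fun pi => \prod_(i < C) (tau%:MP - 'X_i) - \prod_(j < m) (tau%:MP - 'X_(h pi j)) ^+ c j)).
  by rewrite [RHS](reindex_inj hinj).
move=> pi _; rewrite rmorphB; congr (_ - _); first exact: msym_prodX1.
transitivity (\prod_(j < m) (tau%:MP - 'X_(s (pi j))) ^+ c j); first exact: msym_prodX.
by apply: eq_bigr => j _; rewrite ffunE.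
Qed.

Lemma Sym_eval tau (v : 'I_C -> K) : (Sym tau).@[v] =
  \prod_(pi : {ffun 'I_m -> 'I_C})
    (\prod_(i < C) (tau - v i) - \prod_(j < m) (tau - v (pi j)) ^+ c j).
Proof.
rewrite /Sym rmorph_prod; apply: eq_bigr => pi _.
rewrite rmorphB !rmorph_prod; congr (_ - _); apply: eq_bigr => i _.
  by rewrite rmorphB /= mevalC mevalXU.
by rewrite rmorphXn rmorphB /= mevalC mevalXU.
Qed.

Lemma size_Pp (v : 'I_C -> K) (pi : {ffun 'I_m -> 'I_C}) :
  (size ((\prod_(j < m) ('X - (v (pi j))%:P) ^+ c j)%R) <= C.+1)%N.
Proof.
apply: (leq_trans (size_poly_prod_leq _ _)).
have : (\sum_(j < m) size (('X - (v (pi j))%:P) ^+ c j) <= \sum_(j < m) (c j).+1)%N.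
  apply: leq_sum => j _; apply: (leq_trans (size_poly_exp_leq _ _)).
  by rewrite size_XsubC /= mul1n.
have E : (\sum_(j < m) (c j).+1 = C + m)%N.
  rewrite -hCsum (eq_bigr (fun j => c j + 1)%N); last by move=> j _; rewrite addn1.
  by rewrite big_split /= sum1_card card_ord.
rewrite E cardT size_enum_ord.
move: (\sum_(j < m) _)%N => S hS; lia.
Qed.

Lemma size_PP (v : 'I_C -> K) : size (\prod_(i < C) ('X - (v i)%:P)) = C.+1.
Proof. by rewrite size_prod_XsubC [index_enum _]unlock -enumT size_enum_ord. Qed.

Lemma Sym_zero_poly (v : 'I_C -> K) (T : seq K) : uniq T ->
  (#|{ffun 'I_m -> 'I_C}| * C < size T)%N ->
  (forall tau, tau \in T -> (Sym tau).@[v] = 0) ->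
  exists pi : {ffun 'I_m -> 'I_C},
    \prod_(i < C) ('X - (v i)%:P) = \prod_(j < m) ('X - (v (pi j))%:P) ^+ c j.
Proof.
move=> uT hT hSym.
set PP := \prod_(i < C) ('X - (v i)%:P).
pose Pp (pi : {ffun 'I_m -> 'I_C}) := \prod_(j < m) ('X - (v (pi j))%:P) ^+ c j.
case: (boolP [exists pi, PP - Pp pi == 0]) => [/existsP [pi /eqP h]|hno].
  by exists pi; apply/eqP; rewrite -subr_eq0 h.
exfalso.
have hnz : forall pi, PP - Pp pi != 0.
  by move=> pi; apply: contraNneq hno => h; apply/existsP; exists pi; rewrite h.
pose Qp := \prod_(pi : {ffun 'I_m -> 'I_C}) (PP - Pp pi).
have Qnz : Qp != 0 by apply/prodf_neq0 => pi _; exact: hnz.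
have hroots : all (root Qp) T.
  apply/allP => tau htau; rewrite /root /Qp horner_prod -(hSym tau htau) Sym_eval.
  apply/eqP; apply: eq_bigr => pi _; rewrite hornerD hornerN /PP /Pp !horner_prod.
  congr (_ - _); apply: eq_bigr => i _; by rewrite ?horner_exp !hornerE.
have := max_poly_roots Qnz hroots uT.
have hsz : (size Qp <= (#|{ffun 'I_m -> 'I_C}| * C).+1)%N.
  apply: (leq_trans (size_poly_prod_leq _ _)).
  have : (\sum_(pi : {ffun 'I_m -> 'I_C}) size ((PP - Pp pi)%R) <= \sum_(pi : {ffun 'I_m -> 'I_C}) C.+1)%N.
    apply: leq_sum => pi _; apply: (leq_trans (size_add _ _)).
    by rewrite size_opp geq_max size_PP leqnn size_Pp.
  rewrite sum_nat_const cardT -cardE.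
  move: (\sum_(pi : {ffun 'I_m -> 'I_C}) _)%N => S hS.
  move: #|{ffun 'I_m -> 'I_C}| hS => N hS; nia.
move=> h; move: hT hsz h; move: (size T) (size Qp) (#|{ffun 'I_m -> 'I_C}| * C)%N => a b d; lia.
Qed.

Definition lin k : {mpoly K[q]} := - \sum_(i < q) (cK (nth 0 A i) ^+ (q.-1 - k)) *: 'X_i.
Definition yv n : 'I_q -> K := fun i => (tK + cK (nth 0 A i)) ^+ n.
Definition vE (E : seq nat) : 'I_C -> K := fun i => - tK ^+ (q ^ nth 0%N E i).

Lemma lin_eval k n : (lin k).@[yv n] = ell k n.
Proof.
rewrite /lin mevalN (raddf_sum (meval (yv n))) /ell (big_nth 0); case: hA => _ -> _; rewrite big_mkord.
by congr (- _); apply: eq_bigr => i _ /=; rewrite mevalZ mevalXU.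
Qed.

Definition Qt tau : {mpoly K[C]} := sval (sym_fundamental (Sym_sym tau)).
Lemma Qt_spec tau : Qt tau \mPo [tuple @mesym C K i.+1 | i < C] = Sym tau.
Proof. by rewrite /Qt; case: (sym_fundamental _) => t [ht _] /=. Qed.

Definition Etau tau : {mpoly K[q]} :=
  Qt tau \mPo [tuple ((-1) ^+ i.+1 *: lin (C - i.+1)) | i < C].

Lemma PE_tuple E : size E = C ->
  PE E = \prod_(x <- [tuple vE E i | i < C]) ('X - x%:P).
Proof.
move=> hE; rewrite big_tuple /PE (big_nth 0%N) hE big_mkord.
by apply: eq_bigr => i _; rewrite tnth_mktuple.
Qed.

Lemma Etau_eval tau E : size E = C -> (C < q.-1)%N ->
  (Etau tau).@[yv (\sum_(e <- E) q ^ e)%N] = (Sym tau).@[vE E].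
Proof.
move=> hE hCq; rewrite /Etau comp_mpoly_meval -Qt_spec comp_mpoly_meval.
apply: meval_eq => i; rewrite !tnth_mktuple mevalZ lin_eval ell_PE; last 2 first.
- by rewrite hE.
- by apply: (leq_trans (leq_subr _ _)); apply: ltnW.
have hi : (i.+1 < C.+1)%N by rewrite ltnS.
have := mroots_coeff [tuple vE E i | i < C] (Ordinal hi).
rewrite -PE_tuple // /= => ->.
rewrite signrMK; apply: meval_eq => j; by rewrite tnth_mktuple.
Qed.

Definition Elist (ns : 'I_m -> nat) : seq nat := flatten [seq nseq (c j) (ns j) | j <- enum 'I_m].

Lemma iter_mulK (x : K) k : iter k ( *%R x) 1 = x ^+ k.
Proof. by elim: k => [|k IH]; rewrite ?expr0 //= IH exprS. Qed.

Lemma Elist_sum ns : (\sum_(e <- Elist ns) q ^ e)%N = (\sum_(j < m) c j * q ^ ns j)%N.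
Proof.
rewrite /Elist big_flatten big_map big_enum /=; apply: eq_bigr => j _.
by rewrite big_nseq iter_addn_0 mulnC.
Qed.

Lemma Elist_prod ns (G : nat -> K) : \prod_(e <- Elist ns) G e = \prod_(j < m) G (ns j) ^+ c j.
Proof.
rewrite /Elist big_flatten big_map big_enum /=; apply: eq_bigr => j _.
by rewrite big_nseq iter_mulK.
Qed.

Lemma Elist_size ns : size (Elist ns) = C.
Proof.
rewrite /Elist size_flatten /shape -map_comp sumnE big_map big_enum /= -hCsum.
by apply: eq_bigr => j _; rewrite size_nseq.
Qed.

Lemma Elist_mem ns j : (0 < c j)%N -> ns j \in Elist ns.
Proof.
move=> hcj; apply/flattenP; exists (nseq (c j) (ns j)).
  by apply/mapP; exists j; rewrite ?mem_enum.
by rewrite mem_nseq hcj eqxx.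
Qed.

Lemma tK_neq0 (a : L) : tK + cK a != 0.
Proof.
rewrite /tK /cK -rmorphD tofrac_eq0 -size_poly_eq0 size_XaddC //.
Qed.

Lemma tKX_inj a b : tK ^+ a = tK ^+ b -> a = b.
Proof.
rewrite /tK -!rmorphXn => /eqP; rewrite tofrac_eq => /eqP h; have := congr1 (fun x : {poly L} => size x) h.
by rewrite !size_polyXn => -[].
Qed.

Lemma prod_vE E (tau : K) : size E = C ->
  \prod_(i < C) (tau - vE E i) = \prod_(e <- E) (tau + tK ^+ (q ^ e)).
Proof.
move=> hE; rewrite [RHS](big_nth 0%N) hE big_mkord.
by apply: eq_bigr => i _; rewrite /vE opprK.
Qed.

Hypothesis hC2 : (2 * C < q)%N.
Hypothesis hC0 : (0 < C)%N.
Hypothesis hc : forall j, (0 < c j)%N.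

Lemma hCq : (C < q.-1)%N.
Proof. have := hC2; have := hC0; clear; glia_gen (p ^ r)%N. Qed.

Definition NT := (#|{ffun 'I_m -> 'I_C}| * C).+1.
Definition Tl : seq K := [seq tK ^+ i | i <- iota 0 NT].
Definition Fset : seq {mpoly K[q]} :=
  [seq lin k | k <- iota C.+1 (q.-1 - C)] ++ (lin C - 1) :: [seq Etau tau | tau <- Tl].

Lemma forward n : Bset q c n -> forall f, f \in Fset -> f.@[yv n] = 0.
Proof.
move=> [ns hn] f; have hCq' := hCq.
set E := Elist ns; have hE : size E = C := Elist_size ns.
have hnE : n = (\sum_(e <- E) q ^ e)%N by rewrite hn Elist_sum.
have hsE : (size E < q.-1)%N by rewrite hE.
rewrite mem_cat inE => /orP[/mapP[k hk ->] | /orP[/eqP -> | /mapP[tau htau ->]]].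
- rewrite lin_eval hnE ell_PE //; last by move: hk; rewrite mem_iota; clear -hCq'; glia_gen (p ^ r)%N.
  rewrite nth_default // size_PE hE; move: hk; rewrite mem_iota; lia.
- rewrite mevalB meval1 lin_eval hnE ell_PE //; last exact: ltnW.
  have -> : (PE E)`_C = lead_coef (PE E) by rewrite lead_coefE size_PE hE.
  by rewrite (monicP (monic_PE E)) subrr.
rewrite hnE Etau_eval // Sym_eval.
have hidx : forall j, (index (ns j) E < C)%N by move=> j; rewrite -hE index_mem Elist_mem.
pose pi0 : {ffun 'I_m -> 'I_C} := [ffun j => Ordinal (hidx j)].
rewrite (bigD1 pi0) //=; apply/eqP; rewrite mulf_eq0; apply/orP; left.
rewrite subr_eq0 prod_vE // Elist_prod; apply/eqP; apply: eq_bigr => j _.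
by rewrite ffunE /vE /= nth_index ?Elist_mem // opprK.
Qed.

Lemma Tl_uniq : uniq Tl.
Proof. by rewrite map_inj_uniq ?iota_uniq // => i j /tKX_inj. Qed.

Lemma converse n : (forall f, f \in Fset -> f.@[yv n] = 0) -> Bset q c n.
Proof.
move=> hF; have hCq' := hCq.
have hlin : forall k, (C < k <= q.-1)%N -> ell k n = 0.
  move=> k hk; rewrite -lin_eval; apply: hF; rewrite mem_cat; apply/orP; left.
  apply/mapP; exists k => //; rewrite mem_iota; move: hk; clear -hCq'; glia_gen (p ^ r)%N.
have hC1 : ell C n = 1.
  apply/eqP; rewrite -subr_eq0 -lin_eval -(meval1 (yv n)) -mevalB; apply/eqP; apply: hF.
  by rewrite mem_cat inE eqxx orbT.
have hEt : forall tau, tau \in Tl -> (Etau tau).@[yv n] = 0.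
  by move=> tau ht; apply: hF; rewrite mem_cat inE; apply/orP; right; apply/orP; right; apply/mapP; exists tau.
set E := Eaux n n.
have hn : (\sum_(e <- E) q ^ e)%N = n := Eaux_sum (leqnn n).
have hsz : (size E <= C)%N.
  rewrite leqNgt; apply/negP => hlt.
  have [k [hk hk0]] := ell_nonzero hC2 hlt.
  by move: hk0; rewrite hlin ?eqxx.
have hsE : (size E < q.-1)%N by apply: (leq_ltn_trans hsz).
have hszE : size E = C.
  apply/eqP; rewrite eqn_leq hsz /= leqNgt; apply/negP => hlt.
  move: hC1; rewrite -hn ell_PE //; last exact: ltnW.
  rewrite nth_default ?size_PE // => /eqP; by rewrite eq_sym oner_eq0.
have hSym : forall tau, tau \in Tl -> (Sym tau).@[vE E] = 0.
  by move=> tau ht; rewrite -Etau_eval // hn; apply: hEt.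
have hTs : (#|{ffun 'I_m -> 'I_C}| * C < size Tl)%N by rewrite size_map size_iota.
have [pi hpi] := Sym_zero_poly Tl_uniq hTs hSym.
have := congr1 (fun P => P.[0]) hpi; rewrite /= !horner_prod.
under eq_bigr do rewrite !hornerE /vE opprK.
under [in RHS]eq_bigr do rewrite horner_exp !hornerE /vE opprK -exprM.
rewrite !prodrXr => /tKX_inj hE'.
exists (fun j => nth 0%N E (pi j)); rewrite -hn (big_nth 0%N) hszE big_mkord hE'.
by apply: eq_bigr => j _; rewrite mulnC.
Qed.

Definition Pend (i : 'I_q) : {mpoly K[q]} := (tK + cK (nth 0 A i))%:MP * 'X_i.
Definition eend (i : 'I_q) : 'X_{1..q} := 0%MM.

Lemma endo_step x i : torus_endo_map Pend eend x i = (tK + cK (nth 0 A i)) * x i.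
Proof.
rewrite /torus_endo_map /laurent_eval /eend mpolyX0 meval1 divr1 /Pend.
by rewrite mevalM mevalC mevalXU.
Qed.

Lemma iter_end n i : iter n (torus_endo_map Pend eend) (fun _ => 1) i = yv n i.
Proof.
elim: n i => [|n IH] i; first by rewrite /yv expr0.
by rewrite iterS endo_step IH /yv exprS.
Qed.

Lemma DML_torus : DML_set_over_torus K q (Bset q c).
Proof.
exists Pend, eend, (fun _ => 1), Fset; split; [|split].
- move=> i; exists (((tK + cK (nth 0 A i))^-1)%:MP * 'X_i), (U_(i) + U_(i))%MM.
  rewrite /Pend /eend add0m mpolyXD mulrACA -mpolyCM divff ?tK_neq0 //.
  by rewrite mul1r.
- by move=> i; exact: oner_neq0.
move=> n; split.
  move=> hB f hf; rewrite (meval_eq _ (iter_end n)); exact: forward.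
move=> h; apply: converse => f hf; rewrite -(meval_eq _ (iter_end n)); exact: h.
Qed.
End Fq.

Theorem corollary3p3 (p : nat) (hp : prime p) (r : nat) (hr : (0 < r)%N)
  (L : closedFieldType) (hL : is_alg_closure_Fp p L)
  (m : nat) (hm : (0 < m)%N) (c : 'I_m -> nat) (hc : forall j, (0 < c j)%N)
  (hsum : (2 * \sum_(j < m) c j < p ^ r)%N) :
  DML_set_over_split_torus {fraction {poly L}} (Bset (p ^ r) c).
Proof.
have pL : p \in [pchar L] by case: hL.
have [A hA] := exists_A pL hr.
have hC0 : (0 < \sum_(j < m) c j)%N.
  rewrite (bigD1 (Ordinal hm)) //=; have := hc (Ordinal hm); lia.
exists (p ^ r)%N; split; first by rewrite expn_gt0 (prime_gt0 hp).
exact: (DML_torus pL hr hA (erefl _) hsum hC0 hc).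
Qed.
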